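(* Let the type be $\mathrm B_n$, $n\ge2$. For $j\in I$ and $k\in\mathbb Z_{\ge0}$: \[ \tilde c_{ji}(-2k-1)=0\ \text{ for } i\in I\setminus\{n\},\qquad \tilde c_{jn}(-2k-2)=0. \] For $j\in I$ and $k=0,1,\dots,n-1$: \[ \tilde c_{ji}(-2k)=\begin{cases}1&\text{if }(\ast)\\0&\text{otherwise}\end{cases}\ (i\in I\setminus\{n\}),\qquad \tilde c_{jn}(-2k-1)=\begin{cases}1&\text{if }k+j-n\in2\mathbb Z_{\ge0}\\0&\text{otherwise.}\end{cases} \] Here $(\ast)$ is the condition that either - [$i+1\le k+j\le 2n-i-1$ and $1-i\le k-j\le i-1$, with $(k+j)-(i+1)\in2\mathbb Z_{\ge0}$ and $(k-j)-(1-i)\in2\mathbb Z_{\ge0}$], or - [$2n-i\le k+j$]. Moreover, for $j\in I$ and $k=0,1,\dots,n-1$: \[ \tilde c_{ji}(-2k)=\tilde c_{ji}(-4n+2+2k)\ (i\in I\setminus\{n\}),\qquad \tilde c_{jn}(-2k-1)=\tilde c_{jn}(-4n+3+2k). \]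
   Context: Let $\mathfrak g$ be of type $\mathrm B_n$ ($n\ge2$), with $I=\{1,\dots,n\}$ and $\alpha_n$ short. The Cartan matrix $c_{ij}=\langle h_i,\alpha_j\rangle$ has: - $c_{ii}=2$; - $c_{i,i+1}=c_{i+1,i}=-1$ for $1\le i\le n-2$; - $c_{n-1,n}=-1$ and $c_{n,n-1}=-2$; - all other entries $0$. Put $r_i=2$ for $i\le n-1$ and $r_n=1$. Define the quantum Cartan matrix $C(z)$ over $\mathbb Z[z^{\pm1}]$ by $C(z)_{ii}=z^{r_i}+z^{-r_i}$ and $C(z)_{ij}=[c_{ij}]_z=(z^{c_{ij}}-z^{-c_{ij}})/(z-z^{-1})$ for $i\neq j$. Let $\widetilde C(z)=C(z)^{-1}$, with entries regarded as elements of $\mathbb Z((z^{-1}))$, and write $\widetilde C(z)_{ji}=\sum_{r\in\mathbb Z}\tilde c_{ji}(r)z^r$. *)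

(* Defs.v *)
From mathcomp Require Import all_boot all_order all_algebra.
Set Implicit Arguments. Unset Strict Implicit. Unset Printing Implicit Defensive.
Import Order.TTheory GRing.Theory Num.Theory.
Local Open Scope ring_scope.

(* Cartan matrix of type B_n, alpha_n short: c_ij = <h_i, alpha_j>. *)
Definition cartanB (n i j : nat) : int :=
  if i == j then 2
  else if ((i.+1 == j) && (j <= n.-1)%N) || ((j.+1 == i) && (i <= n.-1)%N) then -1
  else if (i == n.-1) && (j == n) then -1
  else if (i == n) && (j == n.-1) then -2
  else 0.

Definition rB (n i : nat) : nat := if i == n then 1%N else 2%N.

(* Coefficient of z^s in the quantum integer [m]_z = (z^m - z^-m)/(z - z^-1). *)
Definition qint_coef (m s : int) : int :=
  let a := `|m|%N in
  let c : int := if (a == 0)%N then 0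
    else (((`|s|%N <= a.-1)%N && ((2 %| (s + a%:Z - 1))%Z)) : int) in
  if 0 <= m then c else - c.

(* Coefficient of z^s in the entry C(z)_{ij} of the quantum Cartan matrix. *)
Definition Ccoef (n i j : nat) (s : int) : int :=
  if i == j then ((s == (rB n i)%:Z) : int) + ((s == - (rB n i)%:Z) : int)
  else qint_coef (cartanB n i j) s.

(* A family X (i,k in I) of formal series sum_r X i k r z^r lies in
   Z((z^{-1})) : its support is bounded above. *)
Definition laurent_zinv (n : nat) (X : nat -> nat -> int -> int) : Prop :=
  exists N : int, forall i k r, (1 <= i <= n)%N -> (1 <= k <= n)%N ->
    N < r -> X i k r = 0.

(* Coefficient of z^r in (C(z) X)_{ik}; all entries of C(z) are supported in
   degrees -2..2. *)
Definition CX_coef (n : nat) (X : nat -> nat -> int -> int) (i k : nat) (r : int) : int :=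
  \sum_(1 <= j < n.+1) \sum_(0 <= t < 5) Ccoef n i j (t%:Z - 2) * X j k (r - (t%:Z - 2)).

Definition is_inv_qcartan (n : nat) (X : nat -> nat -> int -> int) : Prop :=
  laurent_zinv n X /\
  forall i k r, (1 <= i <= n)%N -> (1 <= k <= n)%N ->
    CX_coef n X i k r = (((i == k) && (r == 0)) : int).

Definition in2N (x : int) : bool := (0 <= x) && (2 %| x)%Z.

Definition starB (n i j k : nat) : bool :=
  let i := i%:Z in let j := j%:Z in let k := k%:Z in let n := n%:Z in
  [&& i + 1 <= k + j, k + j <= 2 * n - i - 1, 1 - i <= k - j, k - j <= i - 1,
      in2N ((k + j) - (i + 1)) & in2N ((k - j) - (1 - i))]
  || (2 * n - i <= k + j).

(* Main.v *)
From Stdlib Require Import ZArith Lia Bool.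
Open Scope Z_scope.
Definition starZ (n i j k : Z) : bool :=
  ((i + 1 <=? k + j) && (k + j <=? 2 * n - i - 1) && (1 - i <=? k - j) && (k - j <=? i - 1)
    && Z.even (k + j - i - 1)) || (2 * n - i <=? k + j).
Definition Gc (n c j k : Z) : bool :=
  (1 <=? j) && (j <=? n) && (((0 <=? k) && (k <=? n - 1) && starZ n c j k) ||
                    ((n <=? k) && (k <=? 2 * n - 1) && starZ n c j (2 * n - 1 - k))).
Definition in2NZ (x : Z) : bool := (0 <=? x) && Z.even x.
Definition Gn (n j k : Z) : bool :=
  (1 <=? j) && (j <=? n) && (((0 <=? k) && (k <=? n - 1) && in2NZ (k + j - n)) ||
                    ((n <=? k) && (k <=? 2 * n - 2) && in2NZ (2 * n - 2 - k + j - n))).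

Ltac split_atoms :=
  repeat (match goal with
 | |- context [Z.leb ?x ?y] => destruct (Z.leb_spec x y)
 | |- context [Z.eqb ?x ?y] => destruct (Z.eqb_spec x y)
 | |- context [Z.even ?x] => let E := fresh "E" in let m := fresh "m" in
      destruct (Z.even x) eqn:E;
      [ apply Z.even_spec in E; destruct E as [m E]
      | rewrite <- Z.negb_odd in E; apply negb_false_iff in E; apply Z.odd_spec in E; destruct E as [m E] ]
 end; cbn [andb orb Z.b2z]; try lia).

Lemma eqA (n c j k : Z) : 2 <= n -> 1 <= c <= n - 1 -> 1 <= j <= n - 1 -> k <= 2 * n - 2 ->
  Z.b2z (Gc n c j (k+1)) + Z.b2z (Gc n c j (k-1)) - Z.b2z (Gc n c (j-1) k) - Z.b2z (Gc n c (j+1) k)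
  = Z.b2z ((j =? c) && (k =? 0)).
Proof. intros. unfold Gc, starZ. split_atoms. Qed.
Lemma eqB (n c k : Z) : 2 <= n -> 1 <= c <= n - 1 -> k <= 2 * n - 1 ->
  Z.b2z (Gc n c n k) + Z.b2z (Gc n c n (k-1)) - Z.b2z (Gc n c (n-1) k) - Z.b2z (Gc n c (n-1) (k-1)) = 0.
Proof. intros. unfold Gc, starZ. split_atoms. Qed.
Lemma eqAn (n j k : Z) : 2 <= n -> 1 <= j <= n - 1 -> k <= 2 * n - 2 ->
  Z.b2z (Gn n j (k+1)) + Z.b2z (Gn n j (k-1)) - Z.b2z (Gn n (j-1) k) - Z.b2z (Gn n (j+1) k) = 0.
Proof. intros. unfold Gn, in2NZ. split_atoms. Qed.
Lemma eqBn (n k : Z) : 2 <= n -> k <= 2 * n - 2 ->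
  Z.b2z (Gn n n k) + Z.b2z (Gn n n (k-1)) - Z.b2z (Gn n (n-1) k) - Z.b2z (Gn n (n-1) (k-1)) = Z.b2z (k =? 0).
Proof. intros. unfold Gn, in2NZ. split_atoms. Qed.


Ltac dec_leb := repeat (match goal with |- context [Z.leb ?x ?y] => destruct (Z.leb_spec x y) end; cbn [andb orb]; try lia).

Lemma Gc_lo n c j k : 0 <= k <= n - 1 -> 1 <= j <= n -> Gc n c j k = starZ n c j k.
Proof. intros. unfold Gc. dec_leb; rewrite ?orb_false_r; reflexivity. Qed.
Lemma Gc_sym n c j k : 0 <= k <= n - 1 -> Gc n c j (2 * n - 1 - k) = Gc n c j k.
Proof.
intros. unfold Gc. replace (2 * n - 1 - (2 * n - 1 - k)) with k by lia.
dec_leb; rewrite ?orb_false_r; reflexivity.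
Qed.
Lemma Gn_lo n j k : 0 <= k <= n - 1 -> 1 <= j <= n -> Gn n j k = in2NZ (k + j - n).
Proof. intros. unfold Gn. dec_leb; rewrite ?orb_false_r; reflexivity. Qed.
Lemma Gn_sym n j k : 0 <= k <= n - 1 -> Gn n j (2 * n - 2 - k) = Gn n j k.
Proof.
intros. unfold Gn. replace (2 * n - 2 - (2 * n - 2 - k) + j - n) with (k + j - n) by lia.
dec_leb; rewrite ?orb_false_r; try reflexivity.
all: replace (2 * n - 2 - k) with k by lia; reflexivity.
Qed.
Close Scope Z_scope.
Require Import Defs.
From mathcomp Require Import all_boot all_order all_algebra zify ssrZ.
Import Order.TTheory GRing.Theory Num.Theory.
Local Open Scope ring_scope.

Lemma cartan_val (n j j' : nat) : (1 <= j <= n)%N -> (1 <= j' <= n)%N -> j != j' ->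
  cartanB n j j' = if (j < n)%N && ((j' == j.+1) || (j'.+1 == j)) then -1
                   else if (j == n) && (j'.+1 == j) then -2 else 0.
Proof.
move=> hj hj' hne; rewrite /cartanB (negbTE hne).
repeat case: ifP; try lia.
Qed.

Lemma qint_m1 s : qint_coef (-1) s = - ((s == 0) : int).
Proof. rewrite /qint_coef /=. lia. Qed.
Lemma qint_m2 s : qint_coef (-2) s = - (((s == 1) : int) + ((s == -1) : int)).
Proof. rewrite /qint_coef /=. lia. Qed.
Lemma qint_0 s : qint_coef 0 s = 0.
Proof. by []. Qed.

Lemma S_eval (C : int -> int) (Y : int -> int) r :
  \sum_(0 <= t < 5) C (t%:Z - 2) * Y (r - (t%:Z - 2)) =
  C (-2) * Y (r + 2) + C (-1) * Y (r + 1) + C 0 * Y r + C 1 * Y (r - 1) + C 2 * Y (r - 2).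
Proof.
rewrite !big_nat_recr //= big_geq // add0r.
have -> : r - (0%:Z - 2) = r + 2 by lia.
have -> : r - (1%:Z - 2) = r + 1 by lia.
have -> : r - (2%:Z - 2) = r by lia.
have -> : r - (3%:Z - 2) = r - 1 by lia.
have -> : r - (4%:Z - 2) = r - 2 by lia.
by [].
Qed.

Lemma sum_supp (m : nat) (F : nat -> int) (A : seq nat) : uniq A ->
  all (fun a => (1 <= a <= m)%N) A ->
  (forall j, (1 <= j <= m)%N -> j \notin A -> F j = 0) ->
  \sum_(1 <= j < m.+1) F j = \sum_(a <- A) F a.
Proof.
move=> uA allA h0.
rewrite (bigID (fun j => j \in A)) /= [X in _ + X]big1_seq ?addr0; last first.
  move=> j /andP[jA]; rewrite mem_index_iota => hj; apply: h0 => //.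
rewrite -big_filter; apply: perm_big; apply: uniq_perm.
- by rewrite filter_uniq // iota_uniq.
- by [].
move=> x; rewrite mem_filter mem_index_iota.
case xA: (x \in A); rewrite ?andbF //=.
by move/allP: allA => /(_ x xA).
Qed.

Lemma S_evalX n (X : nat -> nat -> int -> int) j j' c r :
  \sum_(0 <= t < 5) Ccoef n j j' (t%:Z - 2) * X j' c (r - (t%:Z - 2)) =
  Ccoef n j j' (-2) * X j' c (r + 2) + Ccoef n j j' (-1) * X j' c (r + 1) +
  Ccoef n j j' 0 * X j' c r + Ccoef n j j' 1 * X j' c (r - 1) + Ccoef n j j' 2 * X j' c (r - 2).
Proof. exact: (S_eval (Ccoef n j j') (X j' c) r). Qed.

Lemma Ccoef_diag n j s : Ccoef n j j s = ((s == (rB n j)%:Z) : int) + ((s == - (rB n j)%:Z) : int).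
Proof. by rewrite /Ccoef eqxx. Qed.
Lemma Ccoef_off n j j' s : j != j' -> Ccoef n j j' s = qint_coef (cartanB n j j') s.
Proof. by move=> h; rewrite /Ccoef (negbTE h). Qed.

Lemma R1 n (X : nat -> nat -> int -> int) (hX : is_inv_qcartan n X) c j r :
  (2 <= n)%N -> (1 <= c <= n)%N -> (1 <= j <= n.-1)%N ->
  X j c (r - 2) + X j c (r + 2) - (if (1 < j)%N then X j.-1 c r else 0) - X j.+1 c r
  = ((j == c) && (r == 0) : int).
Proof.
move=> hn hc hj.
have := hX.2 j c r ltac:(lia) hc; rewrite /CX_coef.
rewrite (@sum_supp n _ (if (1 < j)%N then [:: j.-1; j; j.+1] else [:: j; j.+1])); last first.
- move=> j' hj' hA.
  have hne : j != j' by case: ifP hA => _; rewrite !inE; lia.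
  have hjn : (1 <= j <= n)%N by lia.
  rewrite S_evalX !(@Ccoef_off n j j' _ hne) (@cartan_val n j j' hjn hj' hne).
  case: ifP hA => h1 hA; (rewrite !inE in hA); (case: ifP => h2; [lia|]); (case: ifP => h3; [lia|]);
  by rewrite !qint_0 !mul0r ?addr0.
- case: ifP => h1 /=; lia.
- case: ifP => h1 /=; rewrite !inE; lia.
have e0 s : Ccoef n j j s = ((s == 2) : int) + ((s == -2) : int).
  by rewrite Ccoef_diag /rB ifN //; lia.
have e2 s : Ccoef n j j.+1 s = - ((s == 0) : int).
  by rewrite Ccoef_off ?cartan_val ?ifT ?qint_m1 //; lia.
have n0 : r - (0%:Z - 2) = r + 2 by lia.
have n1 : r - (1%:Z - 2) = r + 1 by lia.
have n2 : r - (2%:Z - 2) = r by lia.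
have n3 : r - (3%:Z - 2) = r - 1 by lia.
have n4 : r - (4%:Z - 2) = r - 2 by lia.
case: ifP => h1; rewrite !big_cons !big_nil /= n0 n1 n2 n3 n4 !e0 !e2 /=.
  have e1 s : Ccoef n j j.-1 s = - ((s == 0) : int).
    by rewrite Ccoef_off ?cartan_val ?ifT ?qint_m1 //; lia.
  by rewrite !e1 /=; lia.
lia.
Qed.

Lemma R2 n (X : nat -> nat -> int -> int) (hX : is_inv_qcartan n X) c r :
  (2 <= n)%N -> (1 <= c <= n)%N ->
  X n c (r - 1) + X n c (r + 1) - X n.-1 c (r - 1) - X n.-1 c (r + 1)
  = ((n == c) && (r == 0) : int).
Proof.
move=> hn hc.
have := hX.2 n c r ltac:(lia) hc; rewrite /CX_coef.
rewrite (@sum_supp n _ [:: n.-1; n]); last first.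
- move=> j' hj' hA.
  have hne : n != j' by rewrite !inE in hA; lia.
  have hjn : (1 <= n <= n)%N by lia.
  rewrite S_evalX !(@Ccoef_off n n j' _ hne) (@cartan_val n n j' hjn hj' hne).
  rewrite !inE in hA; (case: ifP => h2; [lia|]); (case: ifP => h3; [lia|]).
  by rewrite !qint_0 !mul0r ?addr0.
- rewrite /=; lia.
- rewrite /= !inE; lia.
have e0 s : Ccoef n n n s = ((s == 1) : int) + ((s == -1) : int).
  by rewrite Ccoef_diag /rB eqxx.
have e1 s : Ccoef n n n.-1 s = - (((s == 1) : int) + ((s == -1) : int)).
  rewrite Ccoef_off; last lia. rewrite cartan_val; try lia. rewrite ifF; last lia. rewrite ifT; last lia. exact: qint_m2.
have n0 : r - (0%:Z - 2) = r + 2 by lia.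
have n1 : r - (1%:Z - 2) = r + 1 by lia.
have n2 : r - (2%:Z - 2) = r by lia.
have n3 : r - (3%:Z - 2) = r - 1 by lia.
have n4 : r - (4%:Z - 2) = r - 2 by lia.
rewrite !big_cons !big_nil /= n0 n1 n2 n3 n4 !e0 !e1 /=.
lia.
Qed.

Lemma dv2 (x : int) : dvdz 2 x = Z.even (Z_of_int x).
Proof.
apply/idP/idP.
- move/dvdzP => [q ->]. have -> : Z_of_int (q * 2) = Z.mul 2 (Z_of_int q) by lia.
  by rewrite Z.even_mul.
- move=> /Z.even_spec [m hm]; apply/dvdzP; exists (int_of_Z m); lia.
Qed.

Local Close Scope ring_scope.
Local Open Scope Z_scope.

Definition XZ (X : nat -> nat -> int -> int) (j c : nat) (r : Z) : Z :=
  Z_of_int (X j c (int_of_Z r)).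

Lemma XZ_X (X : nat -> nat -> int -> int) j c x : X j c x = int_of_Z (XZ X j c (Z_of_int x)).
Proof. by rewrite /XZ !Z_of_intK. Qed.

Lemma R1Z n X (hX : is_inv_qcartan n X) c j r :
  (2 <= n)%N -> (1 <= c <= n)%N -> (1 <= j <= n.-1)%N ->
  XZ X j c (r - 2) + XZ X j c (r + 2) - (if (1 < j)%N then XZ X j.-1 c r else 0)
  - XZ X j.+1 c r = Z.b2z ((j == c) && (r =? 0)).
Proof.
move=> hn hc hj; have := R1 n X hX c j (int_of_Z r) hn hc hj; rewrite /XZ.
have e1 : int_of_Z (r - 2) = (int_of_Z r - 2)%R by lia.
have e2 : int_of_Z (r + 2) = (int_of_Z r + 2)%R by lia.
rewrite -e1 -e2.
case: (Z.eqb_spec r 0) => hr; [have hb : (int_of_Z r == 0%R) = true by apply/eqP; lia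
  | have hb : (int_of_Z r == 0%R) = false by apply/eqP; lia]; rewrite hb;
case: ifP => _; case: eqP => hjc /=; lia.
Qed.

Lemma R2Z n X (hX : is_inv_qcartan n X) c r :
  (2 <= n)%N -> (1 <= c <= n)%N ->
  XZ X n c (r - 1) + XZ X n c (r + 1) - XZ X n.-1 c (r - 1) - XZ X n.-1 c (r + 1)
  = Z.b2z ((n == c) && (r =? 0)).
Proof.
move=> hn hc; have := R2 n X hX c (int_of_Z r) hn hc; rewrite /XZ.
have e1 : int_of_Z (r - 1) = (int_of_Z r - 1)%R by lia.
have e2 : int_of_Z (r + 1) = (int_of_Z r + 1)%R by lia.
rewrite -e1 -e2.
case: (Z.eqb_spec r 0) => hr; [have hb : (int_of_Z r == 0%R) = true by apply/eqP; lia
  | have hb : (int_of_Z r == 0%R) = false by apply/eqP; lia]; rewrite hb;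
case: eqP => hjc /=; lia.
Qed.

Lemma XZ_bound n X (hX : is_inv_qcartan n X) :
  exists N : Z, forall j c r, (1 <= j <= n)%N -> (1 <= c <= n)%N -> N < r -> XZ X j c r = 0.
Proof.
case: hX => [[N hN] _]; exists (Z_of_int N) => j c r hj hc hr.
rewrite /XZ hN //; lia.
Qed.

Lemma uniqD (n : nat) (D : nat -> Z -> Z) (L N : Z) : (2 <= n)%N ->
  (forall j r, (1 <= j <= n.-1)%N -> L <= r ->
     D j (r - 2) + D j (r + 2) - (if (1 < j)%N then D j.-1 r else 0) - D j.+1 r = 0) ->
  (forall r, L <= r -> D n (r - 1) + D n (r + 1) - D n.-1 (r - 1) - D n.-1 (r + 1) = 0) ->
  (forall j r, (1 <= j <= n)%N -> N < r -> D j r = 0) ->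
  forall j m, (1 <= j <= n)%N -> L - 1 <= m -> D j m = 0.
Proof.
move=> hn H1 H2 HB.
suff H : forall t : nat, forall m, N - Z.of_nat t < m -> L - 1 <= m ->
    forall j, (1 <= j <= n)%N -> D j m = 0.
  move=> j m hj hm; apply: (H (Z.to_nat (N - m + 1))) => //; lia.
elim=> [|t IH] m hm hLm.
  by move=> j hj; apply: HB => //; lia.
have Hlt : forall j, (1 <= j <= n.-1)%N -> D j m = 0.
  move=> j hj; have := H1 j (m + 2) hj ltac:(lia).
  have -> : m + 2 - 2 = m by lia.
  have -> : m + 2 + 2 = m + 4 by lia.
  rewrite (IH (m + 4)) ?(IH (m + 2) _ _ j.+1); try lia.
  case: ifP => h1; last by lia.
  rewrite (IH (m + 2) _ _ j.-1); lia.
move=> j hj; case: (ltnP j n) => hjn; first by apply: Hlt; lia.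
have -> : j = n by lia.
have := H2 (m + 1) ltac:(lia).
have -> : m + 1 - 1 = m by lia.
have -> : m + 1 + 1 = m + 2 by lia.
rewrite (IH (m + 2)) ?(IH (m + 2) _ _ n.-1) ?(Hlt n.-1); lia.
Qed.


Local Open Scope Z_scope.
Definition Fz (n c j : nat) (r : Z) : Z :=
  if (c < n)%N then (if Z.even r then Z.b2z (Gc (Z.of_nat n) (Z.of_nat c) (Z.of_nat j) (- (r / 2))) else 0)
  else (if Z.even r then 0 else Z.b2z (Gn (Z.of_nat n) (Z.of_nat j) ((- r - 1) / 2))).

Lemma even_2k k : Z.even (- (2 * k)) = true.
Proof. by rewrite Z.even_opp Z.even_mul. Qed.
Lemma even_2k1 k : Z.even (- (2 * k) - 1) = false.
Proof. have -> : - (2 * k) - 1 = 1 + 2 * (- k - 1) by lia. by rewrite Z.even_add_mul_2. Qed.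

Lemma Fz_lt_even n c j k : (c < n)%N ->
  Fz n c j (- (2 * k)) = Z.b2z (Gc (Z.of_nat n) (Z.of_nat c) (Z.of_nat j) k).
Proof.
move=> h; rewrite /Fz h even_2k.
have -> : - (2 * k) / 2 = - k by rewrite -Z.mul_opp_r Z.mul_comm Z.div_mul.
by rewrite Z.opp_involutive.
Qed.
Lemma Fz_lt_odd n c j k : (c < n)%N -> Fz n c j (- (2 * k) - 1) = 0.
Proof. by move=> h; rewrite /Fz h even_2k1. Qed.
Lemma Fz_n_odd n c j k : ~~ (c < n)%N ->
  Fz n c j (- (2 * k) - 1) = Z.b2z (Gn (Z.of_nat n) (Z.of_nat j) k).
Proof.
move=> h; rewrite /Fz (negbTE h) even_2k1.
have -> : (- (- (2 * k) - 1) - 1) / 2 = k by rewrite (_ : - (- (2 * k) - 1) - 1 = k * 2); [rewrite Z.div_mul|lia].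
by [].
Qed.
Lemma Fz_n_even n c j k : ~~ (c < n)%N -> Fz n c j (- (2 * k)) = 0.
Proof. by move=> h; rewrite /Fz (negbTE h) even_2k. Qed.

Lemma par_dec (r : Z) : exists k, r = - (2 * k) \/ r = - (2 * k) - 1.
Proof.
case: (Z.Even_or_Odd r) => [[q ->]|[q ->]]; [exists (- q); left | exists (- q - 1); right]; lia.
Qed.

Lemma Fz_j0 n c r : Fz n c 0 r = 0.
Proof. by rewrite /Fz; case: ifP; case: Z.even. Qed.

Lemma dconv (j c : nat) (k : Z) :
  Z.b2z ((Z.of_nat j =? Z.of_nat c) && (k =? 0)) = Z.b2z ((j == c) && (- (2 * k) =? 0)).
Proof.
have [->|hjc] := eqVneq j c.
  by rewrite Z.eqb_refl /=; case: (Z.eqb_spec k 0) => h1; case: (Z.eqb_spec (- (2 * k)) 0) => h2 //=; lia.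
by rewrite (_ : (Z.of_nat j =? Z.of_nat c) = false) //; apply/Z.eqb_neq; lia.
Qed.

Lemma FR1 n c j r : (2 <= n)%N -> (1 <= c <= n)%N -> (1 <= j <= n.-1)%N ->
  - 4 * Z.of_nat n + 3 <= r ->
  Fz n c j (r - 2) + Fz n c j (r + 2) - (if (1 < j)%N then Fz n c j.-1 r else 0) - Fz n c j.+1 r
  = Z.b2z ((j == c) && (r =? 0)).
Proof.
move=> hn hc hj hr.
have -> : (if (1 < j)%N then Fz n c j.-1 r else 0) = Fz n c j.-1 r.
  by case: ifP => h //; rewrite (_ : j.-1 = 0%N) ?Fz_j0 //; lia.
have ej1 : Z.of_nat j.-1 = Z.of_nat j - 1 by lia.
have ej2 : Z.of_nat j.+1 = Z.of_nat j + 1 by lia.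
case: (par_dec r) => k [hrk|hrk]; subst r; case: (ltnP c n) => hcn.
- have -> : - (2 * k) - 2 = - (2 * (k + 1)) by lia.
  have -> : - (2 * k) + 2 = - (2 * (k - 1)) by lia.
  rewrite !Fz_lt_even // ej1 ej2 eqA ?dconv //; lia.
- have -> : - (2 * k) - 2 = - (2 * (k + 1)) by lia.
  have -> : - (2 * k) + 2 = - (2 * (k - 1)) by lia.
  rewrite !Fz_n_even; try lia.
- have -> : - (2 * k) - 1 - 2 = - (2 * (k + 1)) - 1 by lia.
  have -> : - (2 * k) - 1 + 2 = - (2 * (k - 1)) - 1 by lia.
  rewrite !Fz_lt_odd //.
  by case: (Z.eqb_spec (- (2 * k) - 1) 0) => h; [lia | rewrite andbF].
- have -> : - (2 * k) - 1 - 2 = - (2 * (k + 1)) - 1 by lia.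
  have -> : - (2 * k) - 1 + 2 = - (2 * (k - 1)) - 1 by lia.
  rewrite !Fz_n_odd; try lia.
  rewrite ej1 ej2 eqAn; try lia.
Qed.

Lemma FR2 n c r : (2 <= n)%N -> (1 <= c <= n)%N -> - 4 * Z.of_nat n + 3 <= r ->
  Fz n c n (r - 1) + Fz n c n (r + 1) - Fz n c n.-1 (r - 1) - Fz n c n.-1 (r + 1)
  = Z.b2z ((n == c) && (r =? 0)).
Proof.
move=> hn hc hr.
have en1 : Z.of_nat n.-1 = Z.of_nat n - 1 by lia.
case: (par_dec r) => k [hrk|hrk]; subst r; case: (ltnP c n) => hcn.
- have -> : - (2 * k) + 1 = - (2 * (k - 1)) - 1 by lia.
  rewrite !Fz_lt_odd //; rewrite (_ : n == c = false) //; apply/negbTE; lia.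
- have ec : c = n by lia.
  subst c; rewrite eqxx /=.
  have -> : - (2 * k) + 1 = - (2 * (k - 1)) - 1 by lia.
  rewrite !Fz_n_odd ?ltnn // en1 eqBn; try lia.
  by case: (Z.eqb_spec k 0) => h1; case: (Z.eqb_spec (- (2 * k)) 0) => h2 //=; lia.
- have -> : - (2 * k) - 1 - 1 = - (2 * (k + 1)) by lia.
  have -> : - (2 * k) - 1 + 1 = - (2 * k) by lia.
  rewrite !Fz_lt_even // en1.
  have := eqB (Z.of_nat n) (Z.of_nat c) (k + 1) ltac:(lia) ltac:(lia) ltac:(lia).
  rewrite (_ : k + 1 - 1 = k); last lia.
  rewrite (_ : n == c = false); last by apply/negbTE; lia.
  move=> ->; by [].
- have -> : - (2 * k) - 1 - 1 = - (2 * (k + 1)) by lia.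
  have -> : - (2 * k) - 1 + 1 = - (2 * k) by lia.
  rewrite !Fz_n_even; try lia.
Qed.

Lemma Fz_pos n c j r : 0 < r -> Fz n c j r = 0.
Proof.
move=> hr; case: (par_dec r) => k [hrk|hrk]; subst r; case: (ltnP c n) => hcn.
- rewrite Fz_lt_even // /Gc; split_atoms.
- rewrite Fz_n_even //; lia.
- rewrite Fz_lt_odd //.
- rewrite Fz_n_odd; last lia. rewrite /Gn; split_atoms.
Qed.

Lemma ident n X (hX : is_inv_qcartan n X) c : (2 <= n)%N -> (1 <= c <= n)%N ->
  forall j m, (1 <= j <= n)%N -> - 4 * Z.of_nat n + 2 <= m -> XZ X j c m = Fz n c j m.
Proof.
move=> hn hc.
have [N hN] := XZ_bound n X hX.
have H := uniqD n (fun j r => XZ X j c r - Fz n c j r) (- 4 * Z.of_nat n + 3) (Z.max N 0) hn.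
move=> j m hj hm.
suff: XZ X j c m - Fz n c j m = 0 by lia.
apply: H => //; last lia.
- move=> j' r hj' hr.
  have := R1Z n X hX c j' r hn hc hj'.
  have := FR1 n c j' r hn hc hj' hr.
  case: ifP => _; lia.
- move=> r hr.
  have := R2Z n X hX c r hn hc.
  have := FR2 n c r hn hc hr.
  lia.
- move=> j' r hj' hr.
  rewrite hN ?Fz_pos //; lia.
Qed.

Lemma even_m2 r : Z.even (r - 2) = Z.even r.
Proof. rewrite Z.even_sub /=; by case: (Z.even r). Qed.
Lemma even_p2 r : Z.even (r + 2) = Z.even r.
Proof. rewrite Z.even_add /=; by case: (Z.even r). Qed.
Lemma even_m1 r : Z.even (r - 1) = ~~ Z.even r.
Proof. rewrite Z.even_sub /=; by case: (Z.even r). Qed.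
Lemma even_p1 r : Z.even (r + 1) = ~~ Z.even r.
Proof. rewrite Z.even_add /=; by case: (Z.even r). Qed.

Lemma parity n X (hX : is_inv_qcartan n X) c : (2 <= n)%N -> (1 <= c <= n)%N ->
  forall j m, (1 <= j <= n)%N -> Z.even m = (c == n) -> XZ X j c m = 0.
Proof.
move=> hn hc j m hj hm.
have [N hN] := XZ_bound n X hX.
have H := uniqD n (fun j r => if Z.even r == (c == n) then XZ X j c r else 0) (m + 1) N hn.
have e : XZ X j c m = (if Z.even m == (c == n) then XZ X j c m else 0) by rewrite hm eqxx.
rewrite e; apply: (H _ _ _ j m hj); last lia.
- move=> j' r hj' _; rewrite even_m2 even_p2.
  case: ifP => h; last by case: ifP.
  have := R1Z n X hX c j' r hn hc hj'.
  case: (Z.eqb_spec r 0) => hr0; last by rewrite andbF /= => ->.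
  subst r; move: h => /= /eqP h.
  rewrite (_ : j' == c = false) /=; [by move=> -> | apply/negbTE; lia].
- move=> r _; rewrite even_m1 even_p1.
  case: ifP => h; last by [].
  have := R2Z n X hX c r hn hc.
  case: (Z.eqb_spec r 0) => hr0; last by rewrite andbF /= => ->.
  subst r; move: h => /= /eqP h.
  rewrite (_ : n == c = false) /=; [by move=> -> | apply/negbTE; lia].
- move=> j' r hj' hr; case: ifP => // _; apply: hN => //; lia.
Qed.

Lemma dv2i (x : int) : (x \in dvdz 2) = Z.even (Z_of_int x).
Proof. exact: dv2. Qed.

Lemma in2N_Z (x : int) : in2N x = in2NZ (Z_of_int x).
Proof.
rewrite /in2N /in2NZ dv2i; congr andb.
by case: (Z.leb_spec 0 (Z_of_int x)) => h; [apply/idP | apply/negbTE]; lia.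
Qed.

Lemma starBZ n i j k : starB n i j k = starZ (Z.of_nat n) (Z.of_nat i) (Z.of_nat j) (Z.of_nat k).
Proof.
rewrite /starB /starZ /in2N !dv2i.
have e1 : Z_of_int (k%:Z + j%:Z - (i%:Z + 1))%R = Z.of_nat k + Z.of_nat j - Z.of_nat i - 1 by lia.
have e2 : Z_of_int (k%:Z - j%:Z - (1 - i%:Z))%R = (Z.of_nat k + Z.of_nat j - Z.of_nat i - 1) + 2 * (Z.of_nat i - Z.of_nat j) by lia.
rewrite e1 e2 Z.even_add_mul_2.
case: (Z.even (Z.of_nat k + Z.of_nat j - Z.of_nat i - 1)); rewrite ?andbT ?andbF; apply/idP/idP; lia.
Qed.

Local Close Scope Z_scope.
Local Open Scope ring_scope.

Theorem lemmaA1 (n : nat) (hn : (2 <= n)%N) (X : nat -> nat -> int -> int)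
    (hX : is_inv_qcartan n X) :
  (forall (j k : nat), (1 <= j <= n)%N ->
     (forall i : nat, (1 <= i <= n.-1)%N -> X j i (- (2 * k%:Z) - 1) = 0) /\
     X j n (- (2 * k%:Z) - 2) = 0) /\
  (forall (j k : nat), (1 <= j <= n)%N -> (k <= n.-1)%N ->
     (forall i : nat, (1 <= i <= n.-1)%N ->
        X j i (- (2 * k%:Z)) = (if starB n i j k then 1 else 0)) /\
     X j n (- (2 * k%:Z) - 1) =
        (if in2N (k%:Z + j%:Z - n%:Z) then 1 else 0)) /\
  (forall (j k : nat), (1 <= j <= n)%N -> (k <= n.-1)%N ->
     (forall i : nat, (1 <= i <= n.-1)%N ->
        X j i (- (2 * k%:Z)) = X j i (- (4 * n%:Z) + 2 + 2 * k%:Z)) /\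
     X j n (- (2 * k%:Z) - 1) = X j n (- (4 * n%:Z) + 3 + 2 * k%:Z)).
Proof.
split; [|split].
- move=> j k hj; split.
  + move=> i hi.
    have hz : Z_of_int (- (2 * k%:Z) - 1) = (- (2 * Z.of_nat k) - 1)%Z by lia.
    rewrite XZ_X hz (parity n X hX i hn _ j _ hj) //; first lia.
    by rewrite even_2k1; apply/esym/negbTE; lia.
  + have hz : Z_of_int (- (2 * k%:Z) - 2) = (- (2 * (Z.of_nat k + 1)))%Z by lia.
    rewrite XZ_X hz (parity n X hX n hn _ j _ hj) //; first lia.
    by rewrite even_2k eqxx.
- move=> j k hj hk; split.
  + move=> i hi.
    have hz : Z_of_int (- (2 * k%:Z)) = (- (2 * Z.of_nat k))%Z by lia.
    rewrite XZ_X hz (ident n X hX i hn _ j _ hj); [|lia|lia].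
    rewrite Fz_lt_even; last lia.
    rewrite Gc_lo; [|lia|lia].
    by rewrite -starBZ; case: starB.
  + have hz : Z_of_int (- (2 * k%:Z) - 1) = (- (2 * Z.of_nat k) - 1)%Z by lia.
    rewrite XZ_X hz (ident n X hX n hn _ j _ hj); [|lia|lia].
    rewrite Fz_n_odd ?ltnn //.
    rewrite Gn_lo; [|lia|lia].
    have hz2 : Z_of_int (k%:Z + j%:Z - n%:Z) = (Z.of_nat k + Z.of_nat j - Z.of_nat n)%Z by lia.
    by rewrite in2N_Z hz2; case: in2NZ.
- move=> j k hj hk; split.
  + move=> i hi.
    have hz : Z_of_int (- (2 * k%:Z)) = (- (2 * Z.of_nat k))%Z by lia.
    have hz2 : Z_of_int (- (4 * n%:Z) + 2 + 2 * k%:Z) = (- (2 * (2 * Z.of_nat n - 1 - Z.of_nat k)))%Z by lia.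
    rewrite !XZ_X hz hz2 !(ident n X hX i hn _ j _ hj); try lia.
    rewrite !Fz_lt_even; try lia.
    by rewrite Gc_sym; [|lia].
  + have hz : Z_of_int (- (2 * k%:Z) - 1) = (- (2 * Z.of_nat k) - 1)%Z by lia.
    have hz2 : Z_of_int (- (4 * n%:Z) + 3 + 2 * k%:Z) = (- (2 * (2 * Z.of_nat n - 2 - Z.of_nat k)) - 1)%Z by lia.
    rewrite !XZ_X hz hz2 !(ident n X hX n hn _ j _ hj); try lia.
    rewrite !Fz_n_odd ?ltnn //.
    by rewrite Gn_sym; [|lia].
Qed.
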